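(* Let $A$ be a finite multiset of $n$ points in $\mathbb{R}^d$ with mean $\mu$, let $\varepsilon,\delta\in(0,1)$, $b>0$, $k=b\log\delta^{-1}$ and $r=\frac{1}{11}\sqrt{\frac{\varepsilon\,\mathrm{Opt}}{n}}$. Let $P=\{\hat\mu_1,\dots,\hat\mu_k\}\subset\mathbb{R}^d$ be points such that at least $\frac{7}{10}b\log\delta^{-1}$ indices $i$ satisfy $\|\hat\mu_i-\mu\|\le r$. If, at iteration $j$, Algorithm $\textsc{FastGD}(P)$ has a point $c_j$ with $\|c_j-\mu\|\le10r$, then $\|c_{j+1}-\mu\|\le11r$.
   Context: $\mu=\frac1n\sum_{p\in A}p$, $\mathrm{Opt}=\sum_{p\in A}\|p-\mu\|^2$. For $q\in\mathbb{R}^d$, $\nabla(q)=\sum_{i:\hat\mu_i\neq q}\frac{q-\hat\mu_i}{\|q-\hat\mu_i\|}$. Algorithm $\textsc{FastGD}(P)$: $c_0$ is the coordinate-wise median of $P$; for $j\ge1$, given $c_{j-1}$ compute $g=\nabla(c_{j-1})$, orthogonally project all points of $P$ onto the line $\{c_{j-1}-tg:t\in\mathbb{R}\}$, and let $c_j$ be a median of the projected points along this line. *)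

(* Defs.v *)
From mathcomp Require Import all_boot all_order all_algebra.
From mathcomp Require Import reals exp.
Set Implicit Arguments. Unset Strict Implicit. Unset Printing Implicit Defensive.
Import Order.TTheory GRing.Theory Num.Theory.
Local Open Scope ring_scope.

Section Defs.
Variables (R : realType) (d : nat).
Local Notation pt := 'rV[R]_d.

Definition dotv (u v : pt) : R := \sum_(i < d) u 0 i * v 0 i.
Definition enorm (v : pt) : R := Num.sqrt (dotv v v).

Definition mean (A : seq pt) : pt := (size A)%:R^-1 *: \sum_(p <- A) p.

Definition Opt (A : seq pt) : R := \sum_(p <- A) enorm (p - mean A) ^+ 2.

Definition grad (P : seq pt) (q : pt) : pt :=
  \sum_(p <- P | p != q) (enorm (q - p))^-1 *: (q - p).

Definition is_median (s : seq R) (m : R) : Prop :=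
  let lo := count (fun x : R => x <= m) s in
  let hi := count (fun x : R => m <= x) s in
  (size s <= 2 * lo)%N /\ (size s <= 2 * hi)%N.

Definition coord_median (P : seq pt) (c0 : pt) : Prop :=
  forall i : 'I_d, is_median [seq (p : pt) 0 i | p <- P] (c0 0 i).

(* One step of FastGD: g = grad(c); project P orthogonally onto the line
   {c - t g : t in R}; c' is a median of the projected points along this
   line.  For g <> 0 the orthogonal projection of p is c - t_p g with
   t_p = - <p - c, g> / ||g||^2, and a median along the line is c - t g
   with t a median of the parameters t_p.  For g = 0 the line degenerates
   to the point c, onto which every point projects, so c' = c. *)
Definition fastgd_step (P : seq pt) (c c' : pt) : Prop :=
  let g := grad P c in
  if g == 0 then c' = c
  else exists t : R,
    is_median [seq - (dotv (p - c) g / dotv g g) | p <- P] t /\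
    c' = c - t *: g.

Definition fastgd_run (P : seq pt) (c : nat -> pt) : Prop :=
  coord_median P (c 0%N) /\ forall j, fastgd_step P (c j) (c j.+1).

End Defs.

(* Main.v *)
Require Import Defs.
From mathcomp Require Import all_boot all_order all_algebra.
From mathcomp Require Import reals exp.
From mathcomp Require Import ring lra zify.
Import Order.TTheory GRing.Theory Num.Theory.
Local Open Scope ring_scope.

Section Helpers.
Variables (R : realType) (d : nat).
Local Notation pt := 'rV[R]_d.

Lemma dotvC (u v : pt) : dotv u v = dotv v u.
Proof. by apply: eq_bigr => i _; rewrite mulrC. Qed.

Lemma dotvBl (u v w : pt) : dotv (u - v) w = dotv u w - dotv v w.
Proof. rewrite /dotv -sumrB; apply: eq_bigr => i _; by rewrite !mxE mulrBl. Qed.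

Lemma dotvZl a (u w : pt) : dotv (a *: u) w = a * dotv u w.
Proof. rewrite /dotv mulr_sumr; apply: eq_bigr => i _; by rewrite !mxE mulrA. Qed.

Lemma dotvBr (u v w : pt) : dotv w (u - v) = dotv w u - dotv w v.
Proof. by rewrite dotvC dotvBl !(dotvC w). Qed.

Lemma dotvZr a (u w : pt) : dotv w (a *: u) = a * dotv w u.
Proof. by rewrite dotvC dotvZl dotvC. Qed.

Lemma dotv_ge0 (u : pt) : 0 <= dotv u u.
Proof. by apply: sumr_ge0 => i _; rewrite -expr2 sqr_ge0. Qed.

Lemma dotv_eq0 (u : pt) : dotv u u = 0 -> u = 0.
Proof.
move=> H; apply/matrixP => i k; rewrite mxE (ord1 i).
have H0 : forall k : 'I_d, true -> 0 <= u 0 k * u 0 k.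
  by move=> k' _; rewrite -expr2 sqr_ge0.
have := psumr_eq0P H0 H (i := k) isT.
by move/eqP; rewrite -expr2 sqrf_eq0 => /eqP.
Qed.

Lemma dotv_exp (w g : pt) t :
  dotv (w - t *: g) (w - t *: g) = dotv w w - 2 * t * dotv w g + t ^+ 2 * dotv g g.
Proof.
rewrite !dotvBl !dotvBr !dotvZl !dotvZr (dotvC g w); ring.
Qed.

Lemma count_sub_in (T : eqType) (s : seq T) (a b : pred T) :
  (forall x, x \in s -> a x -> b x) -> (count a s <= count b s)%N.
Proof.
elim: s => //= x s IH H.
have H1 : (count a s <= count b s)%N by apply: IH => y ys; apply: H; rewrite inE ys orbT.
case ax: (a x).
  by rewrite (H x (mem_head _ _) ax) /= add1n ltnS.
by rewrite add0n; apply: leq_trans H1 (leq_addl _ _).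
Qed.

Lemma key (W Wg G Xg1 Xg2 r t : R) : 0 < G -> W <= 100 * r ^+ 2 ->
  Xg1 ^+ 2 <= r ^+ 2 * G -> Xg2 ^+ 2 <= r ^+ 2 * G ->
  (Xg1 + Wg) / G <= t -> t <= (Xg2 + Wg) / G ->
  W - 2 * t * Wg + t ^+ 2 * G <= 121 * r ^+ 2.
Proof.
move=> G0 HW H1 H2 Ht1 Ht2.
have e1 : Xg1 <= t * G - Wg.
  by move: Ht1; rewrite ler_pdivrMr // => ?; lra.
have e2 : t * G - Wg <= Xg2.
  by move: Ht2; rewrite ler_pdivlMr // => ?; lra.
have hu : (t * G - Wg) ^+ 2 <= r ^+ 2 * G.
  case: (lerP 0 (t * G - Wg)) => h.
    apply: le_trans H2; rewrite ler_pXn2r // ?nnegrE //; lra.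
  apply: le_trans H1; rewrite -sqrrN -(sqrrN Xg1) ler_pXn2r // ?nnegrE //; lra.
have : G * (W - 2 * t * Wg + t ^+ 2 * G) <= G * (121 * r ^+ 2).
  have -> : G * (W - 2 * t * Wg + t ^+ 2 * G) = W * G - Wg ^+ 2 + (t * G - Wg) ^+ 2 by ring.
  have := sqr_ge0 Wg; have := sqr_ge0 r. nra.
by rewrite ler_pM2l.
Qed.

End Helpers.
Arguments dotv_ge0 {R d}.
Arguments dotv_eq0 {R d}.
Arguments key {R}.
Arguments count_sub_in {T s a b}.

Theorem lemma3p4 (R : realType) (d n : nat) (A : seq 'rV[R]_d)
  (eps delta b : R) (P : seq 'rV[R]_d) (c : nat -> 'rV[R]_d) (j : nat) :
  size A = n -> (0 < n)%N ->
  0 < eps < 1 -> 0 < delta < 1 -> 0 < b ->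
  (size P)%:R = b * ln delta^-1 ->
  let mu := mean A in
  let r := 11^-1 * Num.sqrt (eps * Opt A / n%:R) in
  7 / 10 * (b * ln delta^-1) <= (count (fun p => enorm (p - mu) <= r) P)%:R ->
  fastgd_run P c ->
  enorm (c j - mu) <= 10 * r ->
  enorm (c j.+1 - mu) <= 11 * r.
Proof.
move=> _ _ _ _ _ sP mu r; rewrite -sP => Hgood [_ Hstep] Hc.
have r0 : 0 <= r by rewrite mulr_ge0 // ?invr_ge0 // sqrtr_ge0.
have := Hstep j; rewrite /fastgd_step.
set g := grad P (c j).
case: eqP => [_ -> | /eqP gn0]; first by apply: le_trans Hc _; lra.
move=> [t [[Hlo Hhi] ->]].
set G := dotv g g.
have G0 : 0 < G.
  rewrite lt_def dotv_ge0 andbT; apply/eqP => /dotv_eq0 h; by rewrite h eqxx in gn0.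
set good := (fun p => enorm (p - mu) <= r) in Hgood.
set tp := (fun p : 'rV[R]_d => - (dotv (p - c j) g / G)).
have Pn0 : (0 < size P)%N.
  rewrite lt0n size_eq0; apply/eqP => P0; move: gn0.
  by rewrite /g P0 /grad big_nil eqxx.
have exists_good : forall (a : pred 'rV[R]_d),
    (size P <= 2 * count a P)%N -> exists2 p, p \in P & good p && a p.
  move=> a Ha; apply/hasP; apply/negPn/negP => /hasPn Hn.
  have : (count a P <= count (predC good) P)%N.
    apply: count_sub_in => x xP ax /=; have := Hn x xP; by rewrite ax andbT.
  have := count_predC good P => Hc2 Hc1.
  have h2 : (2 * count good P <= size P)%N.
    move: Hc1 Hc2 Ha. set x := count good P. set y := count (predC good) P. set z := count a P. set m := size P. lia.
  have : 2 * (count good P)%:R <= (size P)%:R :> R by rewrite -natrM ler_nat.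
  have : 0 < (size P)%:R :> R by rewrite ltr0n.
  lra.
rewrite !count_map !size_map -/G in Hlo Hhi.
have [p1 p1P /andP [g1 t1]] := exists_good _ Hlo.
have [p2 p2P /andP [g2 t2]] := exists_good _ Hhi.
move: t1 t2; rewrite /preim /= => t1 t2.
set w := c j - mu.
have -> : c j - t *: g - mu = w - t *: g by rewrite /w; rewrite addrAC.
have sqle : forall (v : 'rV[R]_d) (a : R), 0 <= a -> enorm v <= a -> dotv v v <= a ^+ 2.
  move=> v a a0; rewrite /enorm => h; rewrite -(sqr_sqrtr (dotv_ge0 v)).
  by rewrite ler_pXn2r ?nnegrE // sqrtr_ge0.
have bnd : forall p, good p -> ((dotv (p - mu) g) ^+ 2 <= r ^+ 2 * G) /\ (tp p = (- dotv (p - mu) g + dotv w g) / G).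
  move=> p gp; split.
    have X : dotv (p - mu) (p - mu) <= r ^+ 2 by apply: sqle.
    have CS := dotv_ge0 (p - mu - (dotv (p - mu) g / G) *: g).
    rewrite dotv_exp -/G in CS.
    have CS2 : (dotv (p - mu) g) ^+ 2 <= dotv (p - mu) (p - mu) * G.
      have e : dotv (p - mu) (p - mu) * G - (dotv (p - mu) g) ^+ 2 =
        G * (dotv (p - mu) (p - mu) - 2 * (dotv (p - mu) g / G) * dotv (p - mu) g +
           (dotv (p - mu) g / G) ^+ 2 * G).
        by field; rewrite gt_eqF.
      by rewrite -subr_ge0 e mulr_ge0 // ltW.
    apply: le_trans CS2 _; by rewrite ler_pM2r.
  rewrite /tp /w.
  have -> : p - c j = (p - mu) - (c j - mu).
    by rewrite opprB addrA subrK.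
  rewrite !dotvBl; field; by rewrite gt_eqF.
have [b1 e1] := bnd _ g1.
have [b2 e2] := bnd _ g2.
have W100 : dotv w w <= (10 * r) ^+ 2 by apply: sqle; rewrite // mulr_ge0.
rewrite /enorm dotv_exp -/G.
have -> : 11 * r = Num.sqrt ((11 * r) ^+ 2) by rewrite sqrtr_sqr ger0_norm // mulr_ge0.
apply: ler_wsqrtr.
rewrite exprMn (_ : (11 : R) ^+ 2 = 121); last by rewrite expr2; lra.
apply: (@key _ _ _ _ (- dotv (p1 - mu) g) (- dotv (p2 - mu) g)) => //.
- by move: W100; rewrite exprMn (_ : (10 : R) ^+ 2 = 100) // expr2; lra.
- by rewrite sqrrN.
- by rewrite sqrrN.
- by rewrite -e1.
- by rewrite -e2.
Qed.
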